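(* Assume that for every $t$ the local noises $w^1_t,\ldots,w^n_t$ are exchangeable. For any realization $x_{1:t},y_{1:t},a_{1:t}$, $t\in\mathbb{N}$, and irrespective of the strategy $g$, $$\mathbb{E}\big[c(m_t,\hat m_t,a_t)\mid x_{1:t},y_{1:t},a_{1:t}\big]=\hat c(x_t,y_t,a_t):=\sum_{m\in\mathcal{M}(n)}c\big(m,h(T_{\mathsf m}^{y_t}(\cdot,x_t)),a_t\big)\,T_{\mathsf m}^{y_t}(m,x_t).$$
   Context: Setting: $n$ nodes with states $s^i_t$ in a finite set $\mathcal{S}\subset\mathbb{R}$, time $t\in\mathbb{N}$; empirical distribution $m_t(s)=\frac1n\sum_i\mathbb{1}\{s^i_t=s\}\in\mathcal{M}(n)$ (probability vectors on $\mathcal{S}$ with entries in $\{0,\frac1n,\ldots,1\}$); dynamics $s^i_{t+1}=f(s^i_t,m_t,w^i_t)$ with local noise $w^i_t$ in a finite set $\mathcal{W}$. Action $a_t\in\{0,1\}$. Observations $o_t\in\mathcal{M}(n)\cup\{\mathtt{blank}\}$: $o_1=m_1$; if $a_t=0$ then $o_{t+1}=\mathtt{blank}$; if $a_t=1$ then $o_{t+1}=m_{t+1}$ with probability $q\in[0,1]$, else $\mathtt{blank}$. Strategy $a_t=g_t(o_{1:t},a_{1:t-1})$. Primitive random variables are mutually independent. Estimate $\hat m_t=h(\mathbb{P}(m_t\mid o_{1:t},a_{1:t-1}))\in\mathcal{M}(n)$ for a fixed function $h$ on probability distributions over $\mathcal{M}(n)$. Per-step cost $c:\mathcal{M}(n)^2\times\{0,1\}\to\mathbb{R}_{\ge0}$.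 $T_{\mathsf m}(m',m)=\mathbb{P}(m_{t+1}=m'\mid m_t=m)$ is the transition matrix of the Markov chain $m_t$, $T_{\mathsf m}^y$ its $y$-th power. $x_t$ is the last non-blank observation up to $t$ and $y_t$ the number of blanks since, $(x_1,y_1)=(m_1,0)$. *)

(* Defs.v *)
From HB Require Import structures.
From mathcomp Require Import all_boot all_order all_algebra.
Set Implicit Arguments. Unset Strict Implicit. Unset Printing Implicit Defensive.
Import Order.TTheory GRing.Theory Num.Theory.

(* ---------- empirical distributions M(n), encoded by count vectors n*m ---------- *)
Definition Mn (S : finType) (n : nat) : predArgType :=
  {k : {ffun S -> 'I_n.+1} | \sum_(s : S) (k s : nat) == n}.

Definition counts (S : finType) (n : nat) (st : {ffun 'I_n -> S}) : {ffun S -> 'I_n.+1} :=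
  [ffun x => inord #|[pred i | st i == x]|].

Lemma counts_sum (S : finType) (n : nat) (st : {ffun 'I_n -> S}) :
  \sum_(s : S) (counts st s : nat) == n.
Proof.
apply/eqP.
transitivity (\sum_(s : S) \sum_(i : 'I_n) (st i == s : nat)).
  apply: eq_bigr => s _; rewrite ffunE inordK; last first.
    by rewrite ltnS -[X in (_ <= X)%N]card_ord max_card.
  by rewrite -sum1_card big_mkcond /=.
rewrite exchange_big /= -[RHS]card_ord -sum1_card; apply: eq_bigr => i _.
by rewrite (bigD1 (st i)) //= eqxx big1 ?addn0 // => s /negPf; rewrite eq_sym => ->.
Qed.

Definition emp (S : finType) (n : nat) (st : {ffun 'I_n -> S}) : Mn S n :=
  exist _ (counts st) (counts_sum st).

Local Open Scope ring_scope.
Fixpoint Tpow (R : ringType) (M : finType) (T : M -> M -> R) (y : nat) : M -> M -> R :=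
  match y with
  | 0 => fun m' m => (m' == m)%:R
  | y'.+1 => fun m' m => \sum_(m'' : M) T m' m'' * Tpow T y' m'' m
  end.

Section Model.
Variables (R : realFieldType) (S W : finType) (n : nat).
Variable f : S -> Mn S n -> W -> S.
Variables (P0 : {ffun 'I_n -> S} -> R)
          (Pw : {ffun 'I_n -> W} -> R)
          (q : R).                                        (* success prob. of a requested observation *)

(* sample space up to horizon N: initial states, noise vectors w_0..w_{N-1},
   Bernoulli(q) coins deciding whether o_{t+1} is delivered, for t = 0..N-1 *)
Local Open Scope ring_scope.
Definition Omega (N : nat) : finType :=
  ({ffun 'I_n -> S} * {ffun 'I_N -> {ffun 'I_n -> W}} * {ffun 'I_N -> bool})%type.

Definition prob N (w : Omega N) : R :=
  P0 w.1.1 * (\prod_(j : 'I_N) Pw (w.1.2 j)) * \prod_(j : 'I_N) (if w.2 j then q else 1 - q).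

Definition Pr N (A : pred (Omega N)) : R := \sum_(w | A w) prob w.

Definition CE N (X : Omega N -> R) (A : pred (Omega N)) : R :=
  (\sum_(w | A w) prob w * X w) / Pr A.

(* node states s_k (0-based time: k = paper's t - 1) *)
Local Open Scope nat_scope.
Fixpoint st N (w : Omega N) (k : nat) : {ffun 'I_n -> S} :=
  match k with
  | 0 => w.1.1
  | k'.+1 => let p := st w k' in
      if (insub k' : option 'I_N) is Some j
      then [ffun i => f (p i) (emp p) (w.1.2 j i)] else p
  end.

Definition mt N (w : Omega N) k : Mn S n := emp (st w k).

Variable g : nat -> seq (option (Mn S n)) -> seq bool -> bool.

(* history (o_0..o_k, a_0..a_{k-1}); None = blank *)
Fixpoint hist N (w : Omega N) (k : nat) : seq (option (Mn S n)) * seq bool :=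
  match k with
  | 0 => ([:: Some (mt w 0)], [::])
  | k'.+1 => let (os, as_) := hist w k' in
      let a := g k' os as_ in
      let coin := if (insub k' : option 'I_N) is Some j then w.2 j else false in
      (rcons os (if a && coin then Some (mt w k'.+1) else None), rcons as_ a)
  end.

Definition act_at N (w : Omega N) k : bool := g k (hist w k).1 (hist w k).2.

Definition xy_step (p : Mn S n * nat) (o : option (Mn S n)) : Mn S n * nat :=
  if o is Some m then (m, 0%N) else (p.1, p.2.+1).

(* (x_k, y_k): last non-blank observation and number of blanks since *)
Definition xy_at N (w : Omega N) k : Mn S n * nat :=
  foldl xy_step (mt w 0, 0%N) (hist w k).1.

Definition xseq N (w : Omega N) k := [seq (xy_at w j).1 | j <- iota 0 k.+1].
Definition yseq N (w : Omega N) k := [seq (xy_at w j).2 | j <- iota 0 k.+1].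
Definition aseq N (w : Omega N) k := [seq act_at w j | j <- iota 0 k.+1].

Definition belief N (w : Omega N) k : {ffun Mn S n -> R} :=
  [ffun m => Pr [pred w' : Omega N | (mt w' k == m) && (hist w' k == hist w k)]
             / Pr [pred w' : Omega N | hist w' k == hist w k]].

Definition mhat (h : {ffun Mn S n -> R} -> Mn S n) N (w : Omega N) k : Mn S n :=
  h (belief w k).
End Model.

Definition chat (R : ringType) (S : finType) (n : nat)
  (c : Mn S n -> Mn S n -> bool -> R) (h : {ffun Mn S n -> R} -> Mn S n)
  (T : Mn S n -> Mn S n -> R) (x : Mn S n) (y : nat) (a : bool) : R :=
  \sum_(m : Mn S n) c m (h [ffun m' => Tpow T y m' x]) a * Tpow T y m x.

(* Main.v *)
Require Import Defs.
From HB Require Import structures.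
From mathcomp Require Import all_boot all_order all_algebra all_fingroup.
From mathcomp Require Import ring lra.
Import Order.TTheory GRing.Theory Num.Theory.
Local Open Scope ring_scope.

Module Helpers.
Set Implicit Arguments. Unset Strict Implicit. Unset Printing Implicit Defensive.


Section Marg.
Variables (R : comPzRingType) (I X : finType) (k : I).

Definition upd (u : {ffun I -> X}) (x : X) : {ffun I -> X} :=
  [ffun j => if j == k then x else u j].

Lemma upd_k u x : upd u x k = x.
Proof. by rewrite ffunE eqxx. Qed.

Lemma upd_upd u x y : upd (upd u x) y = upd u y.
Proof. by apply/ffunP => j; rewrite !ffunE; case: (j == k). Qed.

Lemma upd_id u : upd u (u k) = u.
Proof. by apply/ffunP => j; rewrite !ffunE; case: eqP => // ->. Qed.

Lemma sum_shift (H : {ffun I -> X} -> R) x y :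
  (forall u z, H (upd u z) = H u) ->
  \sum_(u : {ffun I -> X} | u k == y) H u = \sum_(u : {ffun I -> X} | u k == x) H u.
Proof.
move=> HH.
rewrite (reindex_onto (fun v => upd v y) (fun u => upd u x)); last first.
  by move=> u /eqP <-; rewrite upd_upd upd_id.
apply: eq_big => v; last by rewrite HH.
rewrite upd_k eqxx /= upd_upd; apply/eqP/eqP => [<-|<-]; first by rewrite upd_k.
by rewrite upd_id.
Qed.

Lemma marg (p : X -> R) (G : {ffun I -> X} -> X -> R) :
  \sum_x p x = 1 ->
  (forall u z x, G (upd u z) x = G u x) ->
  \sum_(u : {ffun I -> X}) (\prod_i p (u i)) * G u (u k) =
  \sum_(u : {ffun I -> X}) (\prod_i p (u i)) * (\sum_x p x * G u x).
Proof.
move=> p1 HG.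
pose W' (u : {ffun I -> X}) := \prod_(i | i != k) p (u i).
have W'upd u z : W' (upd u z) = W' u.
  by apply: eq_bigr => i /negPf ik; rewrite ffunE ik.
have Wsplit (u : {ffun I -> X}) : \prod_i p (u i) = p (u k) * W' u by rewrite (bigD1 k).
pose S x := \sum_(u : {ffun I -> X} | u k == x) W' u * G u x.
have -> : \sum_(u : {ffun I -> X}) (\prod_i p (u i)) * G u (u k) = \sum_y p y * S y.
  rewrite (partition_big (fun u : {ffun I -> X} => u k) xpredT) //=.
  apply: eq_bigr => y _; rewrite /S big_distrr /=.
  by apply: eq_bigr => u /eqP <-; rewrite Wsplit mulrA.
rewrite (partition_big (fun u : {ffun I -> X} => u k) xpredT) //=.
symmetry; transitivity (\sum_y p y * \sum_x p x * S x).
  apply: eq_bigr => y _.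
  transitivity (\sum_(u : {ffun I -> X} | u k == y) p y * \sum_x p x * (W' u * G u x)).
    apply: eq_bigr => u /eqP <-; rewrite Wsplit -mulrA; congr (_ * _).
    rewrite big_distrr /=; apply: eq_bigr => x _; ring.
  rewrite -big_distrr /=; congr (_ * _).
  rewrite exchange_big /=; apply: eq_bigr => x _.
  rewrite -big_distrr /=; congr (_ * _); rewrite /S.
  apply: sum_shift => u z; by rewrite W'upd HG.
by rewrite -big_distrl /= p1 mul1r.
Qed.

End Marg.


Section Exch.
Variables (S : finType) (n : nat).

Lemma card_le (st : {ffun 'I_n -> S}) x : (#|[pred i | st i == x]| < n.+1)%N.
Proof. by rewrite ltnS -[X in (_ <= X)%N]card_ord max_card. Qed.

Lemma emp_eq (s s' : {ffun 'I_n -> S}) :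
  (forall x, #|[pred i | s i == x]| = #|[pred i | s' i == x]|) -> emp s = emp s'.
Proof.
move=> H; rewrite /emp.
have E : counts s = counts s' by apply/ffunP => x; rewrite !ffunE H.
move: (counts_sum s) (counts_sum s'); rewrite E => p1 p2.
by rewrite (eq_irrelevance p1 p2).
Qed.

Lemma emp_card (s s' : {ffun 'I_n -> S}) x :
  emp s = emp s' -> #|[pred i | s i == x]| = #|[pred i | s' i == x]|.
Proof.
move=> /(congr1 (fun m : Mn S n => val (sval m x))) /=.
by rewrite !ffunE !inordK ?card_le.
Qed.

Lemma emp_perm (s : {ffun 'I_n -> S}) (sg : 'S_n) : emp [ffun i => s (sg i)] = emp s.
Proof.
apply: emp_eq => x; rewrite -!sum1_card.
rewrite [RHS](reindex_inj (@perm_inj _ sg)) /=.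
by apply: eq_bigl => i; rewrite !inE ffunE.
Qed.

Lemma emp_permP (s s' : {ffun 'I_n -> S}) :
  emp s = emp s' -> exists sg : 'S_n, s' = [ffun i => s (sg i)].
Proof.
move=> E.
have : perm_eq [tuple s' i | i < n] [tuple s i | i < n].
  rewrite /perm_eq; apply/allP => x _ /=.
  have cnt (u : {ffun 'I_n -> S}) : count_mem x [tuple u i | i < n] = #|[pred i | u i == x]|.
    rewrite /= count_map cardE /enum_mem size_filter count_filter.
    by apply: eq_count => i /=; rewrite andbT.
  by rewrite !cnt (emp_card x E).
case/tuple_permP => sg Hsg; exists sg; apply/ffunP => i.
have := congr1 (fun t : n.-tuple S => tnth t i) (val_inj Hsg).
by rewrite /= !tnth_mktuple ffunE.
Qed.
End Exch.


Section M.
Variables (R : realFieldType) (S W : finType) (n : nat) (f : S -> Mn S n -> W -> S)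
  (P0 : {ffun 'I_n -> S} -> R) (Pw : {ffun 'I_n -> W} -> R) (q : R) (N : nat)
  (g : nat -> seq (option (Mn S n)) -> seq bool -> bool).

Local Notation O := (Omega S W n N).
Local Notation prob := (prob P0 Pw q (N:=N)).
Local Notation Pr := (Pr P0 Pw q (N:=N)).
Local Notation st := (st f (N:=N)).
Local Notation mt := (mt f (N:=N)).
Local Notation hist := (hist f g (N:=N)).
Local Notation act_at := (act_at f g (N:=N)).
Local Notation xy_at := (xy_at f g (N:=N)).

Definition pc (b : bool) : R := if b then q else 1 - q.

Lemma sumO (F : O -> R) : \sum_w F w = \sum_a \sum_b \sum_c F ((a, b), c).
Proof.
rewrite (eq_bigr (fun w => F ((w.1.1, w.1.2), w.2))); last by case=> [[a b] c].
rewrite -(pair_bigA _ (fun ab c => F ((ab.1, ab.2), c))) /=.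
by rewrite -(pair_bigA _ (fun a b => \sum_c F ((a, b), c))).
Qed.

Definition updN (w : O) (jo : 'I_N) v : O := ((w.1.1, upd jo w.1.2 v), w.2).
Definition updC (w : O) (jo : 'I_N) b : O := (w.1, upd jo w.2 b).

Lemma margN (jo : 'I_N) (G : O -> {ffun 'I_n -> W} -> R) :
  \sum_v Pw v = 1 ->
  (forall w v x, G (updN w jo v) x = G w x) ->
  \sum_w prob w * G w (w.1.2 jo) = \sum_w prob w * \sum_v Pw v * G w v.
Proof.
move=> p1 HG; rewrite !sumO; apply: eq_bigr => a _.
rewrite exchange_big [RHS]exchange_big /=; apply: eq_bigr => c _.
transitivity (\sum_(b : {ffun 'I_N -> {ffun 'I_n -> W}}) (\prod_i Pw (b i)) *
   (P0 a * (\prod_(j : 'I_N) (if c j then q else 1 - q)) * G ((a, b), c) (b jo))).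
  by apply: eq_bigr => b _; rewrite /Defs.prob /=; ring.
rewrite (@marg _ _ _ jo Pw (fun b x => P0 a * (\prod_(j : 'I_N) (if c j then q else 1 - q)) * G ((a, b), c) x)) //; last first.
  by move=> u z x; rewrite -(HG ((a, u), c) z x).
apply: eq_bigr => b _; rewrite /Defs.prob /= !big_distrr /=.
by apply: eq_bigr => v _; ring.
Qed.

Lemma margC (jo : 'I_N) (G : O -> bool -> R) :
  (forall w b x, G (updC w jo b) x = G w x) ->
  \sum_w prob w * G w (w.2 jo) = \sum_w prob w * \sum_b pc b * G w b.
Proof.
move=> HG; rewrite !sumO; apply: eq_bigr => a _; apply: eq_bigr => b _.
transitivity (\sum_(c : {ffun 'I_N -> bool}) (\prod_i pc (c i)) *
   (P0 a * (\prod_i Pw (b i)) * G ((a, b), c) (c jo))).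
  by apply: eq_bigr => c _; rewrite /Defs.prob /pc /=; ring.
rewrite (@marg _ _ _ jo pc (fun c x => P0 a * (\prod_i Pw (b i)) * G ((a, b), c) x)) //; last first.
- by move=> u z x; rewrite -(HG ((a, b), u) z x).
- by rewrite big_bool /pc /=; ring.
apply: eq_bigr => c _; rewrite /Defs.prob /pc /= !big_distrr /=.
by apply: eq_bigr => v _; ring.
Qed.

Lemma stS (w : O) (jo : 'I_N) :
  st w jo.+1 = [ffun i => f (st w jo i) (emp (st w jo)) (w.1.2 jo i)].
Proof. by rewrite /= valK. Qed.

Lemma st_updN w (jo : 'I_N) v j : (j <= jo)%N -> st (updN w jo v) j = st w j.
Proof.
elim: j => [//|j IH] hj /=; rewrite IH ?(ltnW hj) //.
case: insubP => [j' _ ej|] //=; apply/ffunP => i; rewrite !ffunE ifN //.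
by apply/eqP => E; move: hj; rewrite -ej E ltnn.
Qed.

Lemma st_updC w jo b j : st (updC w jo b) j = st w j.
Proof. by elim: j => //= j ->. Qed.

Definition coin (w : O) j := if (insub j : option 'I_N) is Some jo then w.2 jo else false.
Definition oo (w : O) j := if act_at w j && coin w j then Some (mt w j.+1) else None.

Lemma histS w j : hist w j.+1 =
  (rcons (hist w j).1 (oo w j), rcons (hist w j).2 (act_at w j)).
Proof. by rewrite /= /oo /Defs.act_at /coin; case: (Defs.hist _ _ _ _). Qed.

Lemma hist_updN w (jo : 'I_N) v j : (j <= jo)%N -> hist (updN w jo v) j = hist w j.
Proof.
elim: j => [|j IH] hj; first by rewrite /= /Defs.mt st_updN.
rewrite !histS /oo /Defs.act_at /coin IH ?(ltnW hj) // /Defs.mt st_updN //.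
Qed.

Lemma hist_updC w (jo : 'I_N) b j : (j <= jo)%N -> hist (updC w jo b) j = hist w j.
Proof.
elim: j => [|j IH] hj; first by rewrite /= /Defs.mt st_updC.
have Hc : coin (updC w jo b) j = coin w j.
  rewrite /coin; case: insubP => [j' _ ej|] //=; rewrite ffunE ifN //.
  by apply/eqP => E; move: hj; rewrite -ej E ltnn.
by rewrite !histS /oo /Defs.act_at IH ?(ltnW hj) // /Defs.mt st_updC Hc.
Qed.

Lemma PrE (A : pred O) : Pr A = \sum_w prob w * (A w)%:R.
Proof.
rewrite /Defs.Pr big_mkcond; apply: eq_bigr => w _.
by case: (A w); rewrite ?mulr1 ?mulr0.
Qed.

Hypothesis P0ge : forall s, 0 <= P0 s.
Hypothesis Pwge : forall w, 0 <= Pw w.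
Hypothesis Pw1 : \sum_w Pw w = 1.
Hypothesis exch : forall (sigma : 'S_n) (w : {ffun 'I_n -> W}), Pw [ffun i => w (sigma i)] = Pw w.
Hypothesis q01 : 0 <= q <= 1.
Variable T : Mn S n -> Mn S n -> R.
Hypothesis hT : forall (k : nat) m m', (k < N)%N ->
  Pr [pred w | (mt w k.+1 == m') && (mt w k == m)] = T m' m * Pr [pred w | mt w k == m].

Lemma prob_ge0 w : 0 <= prob w.
Proof.
rewrite /Defs.prob; apply: mulr_ge0; first apply: mulr_ge0 => //.
- by apply: prodr_ge0.
- apply: prodr_ge0 => j _; case: (w.2 j); move/andP: q01 => [q0 q1] //.
  by rewrite subr_ge0.
Qed.

Lemma Pr_ge_prob (A : pred O) w : A w -> prob w <= Pr A.
Proof.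
move=> Aw; rewrite /Defs.Pr (bigD1 w) //= lerDl.
by apply: sumr_ge0 => w' _; apply: prob_ge0.
Qed.

Definition K (s : {ffun 'I_n -> S}) (m' : Mn S n) : R :=
  \sum_v Pw v * (emp [ffun i => f (s i) (emp s) (v i)] == m')%:R.

Lemma K_perm s s' m' : emp s = emp s' -> K s m' = K s' m'.
Proof.
case/emp_permP => sg ->; rewrite /K emp_perm.
pose h (v : {ffun 'I_n -> W}) := [ffun i => v (sg i)].
have hinj : injective h.
  move=> v1 v2 /ffunP E; apply/ffunP => i.
  by have := E (sg^-1 i)%g; rewrite !ffunE permKV.
rewrite [RHS](reindex_inj hinj) /=; apply: eq_bigr => v _.
rewrite exch; congr (_ * (_ == _)%:R).
rewrite -[LHS](emp_perm _ sg); congr emp; apply/ffunP => i; rewrite !ffunE.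
by [].
Qed.

Lemma noise_step (jo : 'I_N) (A : pred O) m' : (forall w v, A (updN w jo v) = A w) ->
  \sum_w prob w * ((mt w jo.+1 == m') && A w)%:R
  = \sum_w prob w * (A w)%:R * K (st w jo) m'.
Proof.
move=> HA.
transitivity (\sum_w prob w * (fun w v => (A w)%:R *
   (emp [ffun i => f (st w jo i) (emp (st w jo)) (v i)] == m')%:R) w (w.1.2 jo)).
  apply: eq_bigr => w _ /=; rewrite /Defs.mt stS.
  by rewrite -natrM mulnb andbC.
rewrite (margN (G := fun w v => (A w)%:R *
   (emp [ffun i => f (st w jo i) (emp (st w jo)) (v i)] == m')%:R)) //; last by move=> w v x /=; rewrite HA st_updN.
apply: eq_bigr => w _ /=; rewrite /K -mulrA; congr (_ * _).
by rewrite big_distrr /=; apply: eq_bigr => v _; ring.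
Qed.

Lemma K_T (jo : 'I_N) w m' : prob w != 0 -> K (st w jo) m' = T m' (mt w jo).
Proof.
move=> nz; set m := mt w jo.
have H := hT m m' (ltn_ord jo); rewrite !PrE /= in H.
have L := @noise_step jo (fun w' => mt w' jo == m) m'.
rewrite /= in L; rewrite L in H; last by move=> w' v; rewrite /Defs.mt st_updN.
set P := \sum_w' prob w' * (mt w' jo == m)%:R in H.
have E2 : \sum_w' prob w' * (mt w' jo == m)%:R * K (st w' jo) m' = K (st w jo) m' * P.
  rewrite /P big_distrr; apply: eq_bigr => w' _ /=; case: eqP => [E|_].
    by rewrite (K_perm _ E); ring.
  by rewrite !mulr0 mul0r.
have Ppos : 0 < P.
  have := @Pr_ge_prob [pred w' | mt w' jo == m] w; rewrite /= eqxx PrE => /(_ isT).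
  apply: lt_le_trans; rewrite lt0r nz; exact: prob_ge0.
apply: (mulIf (lt0r_neq0 Ppos)); by rewrite -E2 H.
Qed.

Lemma markov (jo : 'I_N) (A : pred O) m' : (forall w v, A (updN w jo v) = A w) ->
  Pr [pred w | (mt w jo.+1 == m') && A w]
  = \sum_m T m' m * Pr [pred w | (mt w jo == m) && A w].
Proof.
move=> HA; rewrite PrE /= (noise_step m' HA).
transitivity (\sum_w prob w * (A w)%:R * T m' (mt w jo)).
  apply: eq_bigr => w _; have [->|nz] := eqVneq (prob w) 0; first by rewrite !mul0r.
  by rewrite K_T.
under [RHS]eq_bigr do rewrite PrE big_distrr.
rewrite [RHS]exchange_big /=; apply: eq_bigr => w _.
rewrite (bigD1 (mt w jo)) //= eqxx big1 ?addr0 /=; first by ring.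
move=> m ne; rewrite eq_sym (negbTE ne) /=; by rewrite !mulr0.
Qed.

Lemma coin_ind (jo : 'I_N) (A : pred O) : (forall w b, A (updC w jo b) = A w) ->
  Pr [pred w | A w && ~~ w.2 jo] = (1 - q) * Pr A.
Proof.
move=> HA; rewrite !PrE.
transitivity (\sum_w prob w * (fun w b => (A w)%:R * (~~ b)%:R) w (w.2 jo)).
  apply: eq_bigr => w _ /=.
  by rewrite -natrM mulnb.
rewrite (margC (G := fun w b => (A w)%:R * (~~ b)%:R)); last by move=> w b x /=; rewrite HA.
rewrite big_distrr; apply: eq_bigr => w _ /=; rewrite big_bool /pc /=; ring.
Qed.

Lemma eq_Pr (A B : pred O) : A =1 B -> Pr A = Pr B.
Proof. by move=> E; apply: eq_bigl. Qed.

Lemma Pr_const j (A : pred O) x m : (forall w, A w -> mt w j = x) ->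
  Pr [pred w | (mt w j == m) && A w] = (m == x)%:R * Pr A.
Proof.
move=> H; case: (eqVneq m x) => [->|ne].
  rewrite mul1r; apply: eq_Pr => w /=.
  by case Aw: (A w); rewrite ?andbF ?andbT // (H w Aw) eqxx.
rewrite mul0r /Defs.Pr big_pred0 // => w /=.
by case Aw: (A w); rewrite ?andbF // (H w Aw) andbT eq_sym (negbTE ne).
Qed.

Lemma xy_atS w j : xy_at w j.+1 = xy_step (xy_at w j) (oo w j).
Proof. by rewrite /Defs.xy_at histS /= foldl_rcons. Qed.

Lemma histS_eq w w0 j :
  (hist w j.+1 == hist w0 j.+1) = (hist w j == hist w0 j) && (oo w j == oo w0 j).
Proof.
rewrite !histS xpair_eqE !eqseq_rcons.
case: (eqVneq (hist w j) (hist w0 j)) => [E|ne].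
  by rewrite /Defs.act_at E !eqxx /= andbT.
apply/negbTE; move: ne; case: (hist w j) => a b; case: (hist w0 j) => c d /=.
rewrite xpair_eqE negb_and => /orP [] /negbTE ->; by rewrite ?andbF.
Qed.

Lemma coinE (jo : 'I_N) w : coin w jo = w.2 jo.
Proof. by rewrite /coin valK. Qed.

Definition claim j w0 := forall m,
  Pr [pred w | (mt w j == m) && (hist w j == hist w0 j)]
  = Tpow T (xy_at w0 j).2 m (xy_at w0 j).1 * Pr [pred w | hist w j == hist w0 j].

Lemma claim_step (jo : 'I_N) w0 : claim jo w0 -> claim jo.+1 w0.
Proof.
move=> IH m; rewrite xy_atS.
case Eo: (oo w0 jo) => [x|] /=.
  rewrite (Pr_const (A := fun w => hist w jo.+1 == hist w0 jo.+1) (x := x)) //.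
  move=> w; rewrite histS_eq Eo => /andP [_ /eqP]; rewrite /oo.
  by case: ifP => // _ [].
have HE : forall w, (hist w jo.+1 == hist w0 jo.+1) =
    (hist w jo == hist w0 jo) && ~~ (act_at w0 jo && w.2 jo).
  move=> w; rewrite histS_eq Eo; case Eh: (hist w jo == hist w0 jo) => //=.
  rewrite /oo /Defs.act_at (eqP Eh) -/(Defs.act_at f g w0 jo) coinE.
  by case: (_ && _).
have HN : forall w v, (hist (updN w jo v) jo == hist w0 jo) = (hist w jo == hist w0 jo).
  by move=> w v; rewrite hist_updN.
have markov' := markov (A := fun w => hist w jo == hist w0 jo) m HN.
rewrite /= in markov'.
case Ea: (act_at w0 jo).
  rewrite (eq_Pr (A := [pred w | (mt w jo.+1 == m) && (hist w jo.+1 == hist w0 jo.+1)])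
     (B := [pred w | ((mt w jo.+1 == m) && (hist w jo == hist w0 jo)) && ~~ w.2 jo])); last first.
    by move=> w /=; rewrite HE Ea andbA.
  rewrite (eq_Pr (A := [pred w | hist w jo.+1 == hist w0 jo.+1])
     (B := [pred w | (hist w jo == hist w0 jo) && ~~ w.2 jo])); last first.
    by move=> w /=; rewrite HE Ea.
  rewrite (coin_ind (A := fun w => (mt w jo.+1 == m) && (hist w jo == hist w0 jo))); last first.
    by move=> w b; rewrite /Defs.mt st_updC hist_updC.
  rewrite (coin_ind (A := fun w => (hist w jo == hist w0 jo))); last first.
    by move=> w b; rewrite hist_updC.
  have -> : Pr (fun w => (mt w jo.+1 == m) && (hist w jo == hist w0 jo))
     = Pr [pred w | (mt w jo.+1 == m) && (hist w jo == hist w0 jo)] by [].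
  rewrite markov'.
  under eq_bigr do rewrite IH.
  have -> : Pr (fun w => hist w jo == hist w0 jo) = Pr [pred w | hist w jo == hist w0 jo] by [].
  rewrite /= big_distrl big_distrr /=; apply: eq_bigr => m'' _; ring.
rewrite (eq_Pr (A := [pred w | (mt w jo.+1 == m) && (hist w jo.+1 == hist w0 jo.+1)])
   (B := [pred w | (mt w jo.+1 == m) && (hist w jo == hist w0 jo)])); last first.
  by move=> w /=; rewrite HE Ea andbT.
rewrite (eq_Pr (A := [pred w | hist w jo.+1 == hist w0 jo.+1])
   (B := [pred w | hist w jo == hist w0 jo])); last first.
  by move=> w /=; rewrite HE Ea andbT.
rewrite markov'.
under eq_bigr do rewrite IH.
rewrite /= big_distrl /=; apply: eq_bigr => m'' _; ring.
Qed.

Lemma claimM j w0 : (j <= N)%N -> claim j w0.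
Proof.
elim: j => [|j IH] hj; last first.
  exact: (claim_step (jo := Ordinal hj) (IH (ltnW hj))).
move=> m.
rewrite (Pr_const (A := fun w => hist w 0 == hist w0 0) (x := mt w0 0)); last first.
  by move=> w /eqP /(congr1 (fun h => odflt (mt w 0) (head None h.1))).
by rewrite /Defs.xy_at /=.
Qed.

Lemma hist_prefix w w0 j k : (j <= k)%N -> hist w k = hist w0 k -> hist w j = hist w0 j.
Proof.
elim: k => [|k IH] hjk E; first by move: hjk; rewrite leqn0 => /eqP ->.
move: hjk; rewrite leq_eqVlt => /orP [/eqP -> // | hjk].
apply: IH => //; move: E; rewrite !histS.
case=> /rcons_inj [E1 _] /rcons_inj [E2 _].
by rewrite (surjective_pairing (hist w k)) (surjective_pairing (hist w0 k)) E1 E2.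
Qed.

Lemma mt0_eq w w0 : hist w 0 = hist w0 0 -> mt w 0 = mt w0 0.
Proof. by move/(congr1 (fun h => odflt (mt w 0) (head None h.1))). Qed.

Lemma xy_eq w w0 j : hist w j = hist w0 j -> xy_at w j = xy_at w0 j.
Proof.
by move=> E; rewrite /Defs.xy_at E (mt0_eq (hist_prefix (leq0n j) E)).
Qed.

Lemma act_eq w w0 j : hist w j = hist w0 j -> act_at w j = act_at w0 j.
Proof. by move=> E; rewrite /Defs.act_at E. Qed.

Lemma E_iff w w0 k :
  [&& xseq f g w k == xseq f g w0 k, yseq f g w k == yseq f g w0 k &
      aseq f g w k == aseq f g w0 k] = (hist w k == hist w0 k).
Proof.
apply/idP/idP.
  case/and3P => /eqP Ex /eqP Ey /eqP Ea.
  have P j : (j <= k)%N -> xy_at w j = xy_at w0 j /\ act_at w j = act_at w0 j.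
    move=> hj; have mj : j \in iota 0 k.+1 by rewrite mem_iota.
    move/eq_in_map: Ex => /(_ j mj) /= Ex'.
    move/eq_in_map: Ey => /(_ j mj) /= Ey'.
    move/eq_in_map: Ea => /(_ j mj) /= Ea'.
    split => //.
    by rewrite (surjective_pairing (xy_at w j)) (surjective_pairing (xy_at w0 j)) Ex' Ey'.
  suff H : forall j, (j <= k)%N -> hist w j = hist w0 j by rewrite H.
  elim=> [|j IH] hj.
    have [E0 _] := P 0 (leq0n _).
    move/(congr1 fst): E0; rewrite /Defs.xy_at /= => E0.
    by rewrite /= E0.
  have IH' := IH (ltnW hj).
  have [Exy1 Ea0] := P j (ltnW hj).
  have [Exy2 _] := P j.+1 hj.
  rewrite !xy_atS Exy1 in Exy2.
  have Eoo : oo w j = oo w0 j.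
    move: Exy2; rewrite /xy_step; case: (oo w j) => [a|]; case: (oo w0 j) => [b|] //=;
      first [by move/(congr1 fst) => /= -> | by move/(congr1 snd)].
  by rewrite !histS IH' Eoo Ea0.
move/eqP=> E; apply/and3P; split; apply/eqP/eq_in_map => j;
  rewrite mem_iota add0n => /andP [_]; rewrite ltnS => hj /=; have Ej := hist_prefix hj E.
- by rewrite (xy_eq Ej).
- by rewrite (xy_eq Ej).
- by rewrite (act_eq Ej).
Qed.

Lemma belief_eq w w0 k : hist w k = hist w0 k ->
  belief f P0 Pw q g w k = belief f P0 Pw q g w0 k.
Proof. by move=> E; rewrite /Defs.belief E. Qed.

Lemma main_sec (k : nat) (w0 : O) (h : {ffun Mn S n -> R} -> Mn S n)
  (c : Mn S n -> Mn S n -> bool -> R) : (k <= N)%N ->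
  let E := [pred w : O |
              [&& xseq f g w k == xseq f g w0 k,
                  yseq f g w k == yseq f g w0 k &
                  aseq f g w k == aseq f g w0 k]] in
  0 < Pr E ->
  CE P0 Pw q (fun w => c (mt w k) (mhat f P0 Pw q g h w k) (act_at w k)) E
  = chat c h T (xy_at w0 k).1 (xy_at w0 k).2 (act_at w0 k).
Proof.
move=> hk E PE.
have EE : E =1 [pred w | hist w k == hist w0 k] by move=> w; rewrite /E /= E_iff.
have PEE : Pr E = Pr [pred w | hist w k == hist w0 k] := eq_Pr EE.
have PE0 : Pr E != 0 by rewrite lt0r_neq0.
set x := (xy_at w0 k).1; set y := (xy_at w0 k).2.
have Hb : belief f P0 Pw q g w0 k = [ffun m => Tpow T y m x].
  by apply/ffunP => m; rewrite !ffunE claimM // -PEE mulfK.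
rewrite /CE.
have Hsum : \sum_(w | E w) prob w * c (mt w k) (mhat f P0 Pw q g h w k) (act_at w k)
   = \sum_m c m (h [ffun m' => Tpow T y m' x]) (act_at w0 k) * Tpow T y m x * Pr E.
  transitivity (\sum_(w | E w) prob w * c (mt w k) (h [ffun m => Tpow T y m x]) (act_at w0 k)).
    apply: eq_bigr => w Ew.
    have Eh : hist w k = hist w0 k by apply/eqP; rewrite -[_ == _]/([pred w | hist w k == hist w0 k] w) -EE.
    by rewrite /Defs.mhat (belief_eq Eh) Hb (act_eq Eh).
  rewrite (partition_big (fun w : O => mt w k) xpredT) //=; apply: eq_bigr => m _.
  transitivity (\sum_(w | E w && (mt w k == m)) prob w * c m (h [ffun m => Tpow T y m x]) (act_at w0 k)).
    by apply: eq_bigr => w /andP [_ /eqP ->].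
  rewrite -big_distrl /=.
  have -> : \sum_(w | E w && (mt w k == m)) prob w
     = Pr [pred w | (mt w k == m) && (hist w k == hist w0 k)].
    by apply: eq_bigl => w; rewrite (EE w) /= andbC.
  rewrite claimM // -PEE; ring.
rewrite Hsum -big_distrl /= mulfK // /chat.
Qed.

End M.

End Helpers.

Theorem lemma3 (R : realFieldType) (S W : finType) (n : nat)
  (f : S -> Mn S n -> W -> S)
  (P0 : {ffun 'I_n -> S} -> R) (Pw : {ffun 'I_n -> W} -> R) (q : R)
  (T : Mn S n -> Mn S n -> R)
  (h : {ffun Mn S n -> R} -> Mn S n)
  (c : Mn S n -> Mn S n -> bool -> R) :
  (0 < n)%N ->
  (forall s, 0 <= P0 s) -> \sum_s P0 s = 1 ->
  (forall w, 0 <= Pw w) -> \sum_w Pw w = 1 ->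
  (* exchangeability of the local noises w_t^1, ..., w_t^n *)
  (forall (sigma : 'S_n) (w : {ffun 'I_n -> W}), Pw [ffun i => w (sigma i)] = Pw w) ->
  0 <= q <= 1 ->
  (forall m m' a, 0 <= c m m' a) ->
  (* T is the transition matrix of the Markov chain m_t: T(m',m) = P(m_{k+1} = m' | m_k = m) *)
  (forall (N k : nat) (m m' : Mn S n), (k < N)%N ->
     Pr P0 Pw q [pred w : Omega S W n N | (mt f w k.+1 == m') && (mt f w k == m)]
     = T m' m * Pr P0 Pw q [pred w : Omega S W n N | mt f w k == m]) ->
  forall (g : nat -> seq (option (Mn S n)) -> seq bool -> bool)
         (N k : nat) (w0 : Omega S W n N), (k <= N)%N ->
  let E := [pred w : Omega S W n N |
              [&& xseq f g w k == xseq f g w0 k,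
                  yseq f g w k == yseq f g w0 k &
                  aseq f g w k == aseq f g w0 k]] in
  0 < Pr P0 Pw q E ->
  CE P0 Pw q (fun w => c (mt f w k) (mhat f P0 Pw q g h w k) (act_at f g w k)) E
  = chat c h T (xy_at f g w0 k).1 (xy_at f g w0 k).2 (act_at f g w0 k).
Proof.
move=> _ P0ge _ Pwge Pw1 exch q01 _ hT g N k w0 hk E PE.
exact: (Helpers.main_sec P0ge Pwge Pw1 exch q01 (hT N) (k:=k) (w0:=w0) h c hk PE).
Qed.
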